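(* Let $\mathbb{A}$ be the field of real algebraic numbers. $T[\mathbb{R}]$ is a conservative extension of $T[\mathbb{A}]$: every sentence in the language of $T[\mathbb{A}]$ that is provable in $T[\mathbb{R}]$ is provable in $T[\mathbb{A}]$.
   Context: For a subfield $F$ of $\mathbb{R}$ and $a\in F$, $f_a$ is a unary function symbol interpreted as $f_a(x)=ax$. $T_{\mathrm{add}}[F]$ is the set of sentences true in $(\mathbb{R},0,1,+,-,<,(f_a)_{a\in F})$, $T_{\mathrm{mult}}[F]$ the set of sentences true in $(\mathbb{R},0,1,\times,\div,<,(f_a)_{a\in F})$ with $x\div0=0$, and $T[F]=T_{\mathrm{add}}[F]\cup T_{\mathrm{mult}}[F]$, a theory in the union of the two languages. *)

(* Defs.v *)
From Stdlib Require Import Reals ZArith List.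
Open Scope R_scope.

(** * First-order syntax for the combined language
    {0, 1, +, -, ×, ÷, <, =} ∪ {f_a : a ∈ R}; sublanguages are carved out by
    predicates below. Variables are named by natural numbers. *)

Inductive term : Type :=
| tvar  : nat -> term
| tzero : term
| tone  : term
| tadd  : term -> term -> term
| tsub  : term -> term -> term
| tmul  : term -> term -> term
| tdiv  : term -> term -> term
| tscal : R -> term -> term.

Inductive formula : Type :=
| feq  : term -> term -> formula
| flt  : term -> term -> formula
| fbot : formula
| fimp : formula -> formula -> formula
| fand : formula -> formula -> formula
| for_ : formula -> formula -> formula
| fall : nat -> formula -> formula
| fex  : nat -> formula -> formula.

Fixpoint occurs_t (x : nat) (t : term) : Prop :=
  match t with
  | tvar y => x = y
  | tzero | tone => False
  | tadd u v | tsub u v | tmul u v | tdiv u v => occurs_t x u \/ occurs_t x v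
  | tscal _ u => occurs_t x u
  end.

Fixpoint occurs_free (x : nat) (p : formula) : Prop :=
  match p with
  | feq u v | flt u v => occurs_t x u \/ occurs_t x v
  | fbot => False
  | fimp p q | fand p q | for_ p q => occurs_free x p \/ occurs_free x q
  | fall y p | fex y p => x <> y /\ occurs_free x p
  end.

Definition sentence (p : formula) : Prop := forall x, ~ occurs_free x p.

(** Language membership.  [F] is the set of allowed scalars a (for f_a);
    [ad] allows 0,1,+,- ; [mu] allows 0,1,×,÷ (0 and 1 are always allowed). *)
Fixpoint term_in (F : R -> Prop) (ad mu : bool) (t : term) : Prop :=
  match t with
  | tvar _ | tzero | tone => True
  | tadd u v | tsub u v => ad = true /\ term_in F ad mu u /\ term_in F ad mu v
  | tmul u v | tdiv u v => mu = true /\ term_in F ad mu u /\ term_in F ad mu v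
  | tscal a u => F a /\ term_in F ad mu u
  end.

Fixpoint formula_in (F : R -> Prop) (ad mu : bool) (p : formula) : Prop :=
  match p with
  | feq u v | flt u v => term_in F ad mu u /\ term_in F ad mu v
  | fbot => True
  | fimp p q | fand p q | for_ p q => formula_in F ad mu p /\ formula_in F ad mu q
  | fall _ p | fex _ p => formula_in F ad mu p
  end.

Definition L_add  (F : R -> Prop) := formula_in F true false.
Definition L_mult (F : R -> Prop) := formula_in F false true.
Definition L_full (F : R -> Prop) := formula_in F true true.

(** * Structures (equality is interpreted as true equality). *)
Record structure : Type := Structure {
  carrier : Type;
  s_zero : carrier;
  s_one  : carrier;
  s_add  : carrier -> carrier -> carrier;
  s_sub  : carrier -> carrier -> carrier;
  s_mul  : carrier -> carrier -> carrier;
  s_div  : carrier -> carrier -> carrier;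
  s_scal : R -> carrier -> carrier;
  s_lt   : carrier -> carrier -> Prop }.

Fixpoint eval_t (M : structure) (e : nat -> carrier M) (t : term) : carrier M :=
  match t with
  | tvar x => e x
  | tzero => s_zero M
  | tone => s_one M
  | tadd u v => s_add M (eval_t M e u) (eval_t M e v)
  | tsub u v => s_sub M (eval_t M e u) (eval_t M e v)
  | tmul u v => s_mul M (eval_t M e u) (eval_t M e v)
  | tdiv u v => s_div M (eval_t M e u) (eval_t M e v)
  | tscal a u => s_scal M a (eval_t M e u)
  end.

Definition upd {A : Type} (e : nat -> A) (x : nat) (v : A) : nat -> A :=
  fun y => if Nat.eqb y x then v else e y.

Fixpoint holds (M : structure) (e : nat -> carrier M) (p : formula) : Prop :=
  match p with
  | feq u v => eval_t M e u = eval_t M e v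
  | flt u v => s_lt M (eval_t M e u) (eval_t M e v)
  | fbot => False
  | fimp p q => holds M e p -> holds M e q
  | fand p q => holds M e p /\ holds M e q
  | for_ p q => holds M e p \/ holds M e q
  | fall x p => forall v : carrier M, holds M (upd e x v) p
  | fex x p => exists v : carrier M, holds M (upd e x v) p
  end.

Definition sat (M : structure) (p : formula) : Prop :=
  forall e : nat -> carrier M, holds M e p.

(** * The standard real structure:  x ÷ 0 = 0,  f_a(x) = a x. *)
Definition rdiv0 (x y : R) : R := if Req_EM_T y 0 then 0 else x / y.

Definition Rstructure : structure :=
  Structure R 0 1 Rplus Rminus Rmult rdiv0 (fun a x => a * x) Rlt.

Definition T_add (F : R -> Prop) (p : formula) : Prop :=
  sentence p /\ L_add F p /\ sat Rstructure p.
Definition T_mult (F : R -> Prop) (p : formula) : Prop :=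
  sentence p /\ L_mult F p /\ sat Rstructure p.
Definition T (F : R -> Prop) (p : formula) : Prop := T_add F p \/ T_mult F p.

(** Provability, via Gödel completeness, as semantic consequence. *)
Definition entails (Th : formula -> Prop) (p : formula) : Prop :=
  forall M : structure, (forall q, Th q -> sat M q) -> sat M p.

Fixpoint zpoly_eval (cs : list Z) (x : R) : R :=
  match cs with
  | nil => 0
  | c :: cs' => IZR c + x * zpoly_eval cs' x
  end.

Definition real_algebraic (x : R) : Prop :=
  exists cs : list Z, (exists c, In c cs /\ c <> 0%Z) /\ zpoly_eval cs x = 0.

Definition all_reals : R -> Prop := fun _ => True.

(* Main.v *)
(* Strategy: ultraproduct of copies of a model M of T[A] indexed by maps g : R -> A fixing A,
   with f_r interpreted coordinatewise as f_{g r}; Los' theorem; the finite intersection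
   property comes from Tarski transfer (A is existentially closed in R), proved via
   mathcomp-real-closed's quantifier elimination plus an invariant (constants of the
   QE output stay algebraic) and a one-variable density argument. *)
Require Import Defs.
From Stdlib Require Import Reals List Classical ClassicalEpsilon FunctionalExtensionality PropExtensionality ProofIrrelevance.


Lemma eval_ext M e e' t : (forall x, occurs_t x t -> e x = e' x) -> eval_t M e t = eval_t M e' t.
Proof.
induction t; simpl; intro H; try reflexivity;
  try (rewrite IHt1, IHt2; auto; intros; apply H; auto; fail).
- apply H; reflexivity.
- rewrite IHt; auto.
Qed.

Lemma holds_ext M p : forall e e', (forall x, occurs_free x p -> e x = e' x) ->
  (holds M e p <-> holds M e' p).
Proof.
induction p; simpl; intros e e' H.
- rewrite (eval_ext M e e' t), (eval_ext M e e' t0); [tauto| |]; intros; apply H; auto.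
- rewrite (eval_ext M e e' t), (eval_ext M e e' t0); [tauto| |]; intros; apply H; auto.
- tauto.
- rewrite (IHp1 e e'), (IHp2 e e'); [tauto| |]; intros; apply H; auto.
- rewrite (IHp1 e e'), (IHp2 e e'); [tauto| |]; intros; apply H; auto.
- rewrite (IHp1 e e'), (IHp2 e e'); [tauto| |]; intros; apply H; auto.
- assert (K : forall v x, occurs_free x p -> upd e n v x = upd e' n v x).
  { intros v x Hx; unfold upd; destruct (Nat.eqb x n) eqn:E; auto.
    apply H; split; auto; intro; subst; rewrite Nat.eqb_refl in E; discriminate. }
  split; intros Hv v; [apply (proj1 (IHp _ _ (K v)))|apply (proj2 (IHp _ _ (K v)))]; auto.
- assert (K : forall v x, occurs_free x p -> upd e n v x = upd e' n v x).
  { intros v x Hx; unfold upd; destruct (Nat.eqb x n) eqn:E; auto.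
    apply H; split; auto; intro; subst; rewrite Nat.eqb_refl in E; discriminate. }
  split; intros [v Hv]; exists v; [apply (proj1 (IHp _ _ (K v)))|apply (proj2 (IHp _ _ (K v)))]; auto.
Qed.

Lemma sentence_holds M p e e' : sentence p -> holds M e p -> holds M e' p.
Proof.
intros Hs; apply holds_ext; intros x Hx; exfalso; exact (Hs x Hx).
Qed.

Fixpoint tsubst (g : R -> R) (t : term) : term :=
  match t with
  | tvar n => tvar n
  | tzero => tzero
  | tone => tone
  | tadd u v => tadd (tsubst g u) (tsubst g v)
  | tsub u v => tsub (tsubst g u) (tsubst g v)
  | tmul u v => tmul (tsubst g u) (tsubst g v)
  | tdiv u v => tdiv (tsubst g u) (tsubst g v)
  | tscal a u => tscal (g a) (tsubst g u)
  end.

Fixpoint fsubst (g : R -> R) (p : formula) : formula :=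
  match p with
  | feq u v => feq (tsubst g u) (tsubst g v)
  | flt u v => flt (tsubst g u) (tsubst g v)
  | fbot => fbot
  | fimp p q => fimp (fsubst g p) (fsubst g q)
  | fand p q => fand (fsubst g p) (fsubst g q)
  | for_ p q => for_ (fsubst g p) (fsubst g q)
  | fall x p => fall x (fsubst g p)
  | fex x p => fex x (fsubst g p)
  end.

Definition Mg (M : structure) (g : R -> R) : structure :=
  Structure (carrier M) (s_zero M) (s_one M) (s_add M) (s_sub M) (s_mul M) (s_div M)
    (fun a x => s_scal M (g a) x) (s_lt M).

Lemma eval_Mg M g e t : eval_t (Mg M g) e t = eval_t M e (tsubst g t).
Proof. induction t; simpl; congruence. Qed.

Lemma holds_Mg M g p : forall e, holds (Mg M g) e p <-> holds M e (fsubst g p).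
Proof.
induction p; simpl; intro e; rewrite ?eval_Mg; try tauto.
- rewrite IHp1, IHp2; tauto.
- rewrite IHp1, IHp2; tauto.
- rewrite IHp1, IHp2; tauto.
- split; intros H v; apply IHp; auto.
- split; intros [v H]; exists v; apply IHp; auto.
Qed.

Lemma occurs_t_subst g x t : occurs_t x (tsubst g t) <-> occurs_t x t.
Proof. induction t; simpl; tauto. Qed.

Lemma occurs_free_subst g x p : occurs_free x (fsubst g p) <-> occurs_free x p.
Proof. induction p; simpl; rewrite ?occurs_t_subst; tauto. Qed.

Lemma sentence_subst g p : sentence p -> sentence (fsubst g p).
Proof. intros H x Hx; apply (H x); apply (proj1 (occurs_free_subst g x p)); exact Hx. Qed.

Lemma term_in_subst (F F' : R -> Prop) ad mu g t : term_in F ad mu t ->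
  (forall a, F' (g a)) -> term_in F' ad mu (tsubst g t).
Proof. intros H Hg; induction t; simpl in *; firstorder. Qed.

Lemma formula_in_subst (F F' : R -> Prop) ad mu g p : formula_in F ad mu p ->
  (forall a, F' (g a)) -> formula_in F' ad mu (fsubst g p).
Proof.
intros H Hg; induction p; simpl in *; try tauto;
  destruct H; split; eapply term_in_subst; eauto.
Qed.

Lemma tsubst_id (F : R -> Prop) ad mu g t : term_in F ad mu t ->
  (forall a, F a -> g a = a) -> tsubst g t = t.
Proof.
intros H Hg; induction t; simpl in *; try reflexivity;
  try (f_equal; tauto).
destruct H; rewrite Hg, IHt; auto.
Qed.

Lemma fsubst_id (F : R -> Prop) ad mu g p : formula_in F ad mu p ->
  (forall a, F a -> g a = a) -> fsubst g p = p.
Proof.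
intros H Hg; induction p; simpl in *; try reflexivity;
  try (destruct H; f_equal; eapply tsubst_id; eauto; fail);
  try (destruct H; f_equal; tauto); f_equal; tauto.
Qed.


Section Ultra.
Variable I : Type.
Variable U : (I -> Prop) -> Prop.
Hypothesis UT : U (fun _ => True).
Hypothesis U0 : ~ U (fun _ => False).
Hypothesis UI : forall A B, U A -> U B -> U (fun i => A i /\ B i).
Hypothesis UM : forall (A B : I -> Prop), (forall i, A i -> B i) -> U A -> U B.
Hypothesis Uultra : forall A, U A \/ U (fun i => ~ A i).
Variable Ms : I -> structure.

Definition X := forall i, carrier (Ms i).
Definition eqU (x y : X) : Prop := U (fun i => x i = y i).

Lemma eqU_refl x : eqU x x.
Proof. unfold eqU; apply (UM (fun _ => True)); auto. Qed.
Lemma eqU_sym x y : eqU x y -> eqU y x.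
Proof. unfold eqU; apply UM; auto. Qed.
Lemma eqU_trans x y z : eqU x y -> eqU y z -> eqU x z.
Proof.
unfold eqU; intros H1 H2.
apply (UM (fun i => x i = y i /\ y i = z i)); [intros i [h1 h2]; congruence|].
apply UI; auto.
Qed.

Arguments eqU_sym {x y}.
Arguments eqU_trans {x y z}.

Definition C := {P : X -> Prop | exists x, P = eqU x}.
Definition cls (x : X) : C := exist _ (eqU x) (ex_intro _ x eq_refl).
Definition rep (c : C) : X := proj1_sig (constructive_indefinite_description _ (proj2_sig c)).
Lemma rep_spec c : proj1_sig c = eqU (rep c).
Proof. unfold rep; destruct (constructive_indefinite_description _ _); auto. Qed.

Lemma C_ext (c d : C) : proj1_sig c = proj1_sig d -> c = d.
Proof.
destruct c as [P HP], d as [Q HQ]; simpl; intro E; subst Q.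
f_equal; apply proof_irrelevance.
Qed.

Lemma cls_eq x y : cls x = cls y <-> eqU x y.
Proof.
split.
- intro H; assert (E : eqU x = eqU y) by exact (f_equal (@proj1_sig _ _) H).
  rewrite E; apply eqU_refl.
- intro H; unfold cls.
  assert (E : eqU x = eqU y).
  { apply functional_extensionality; intro z; apply propositional_extensionality; split; intro;
    [apply (eqU_trans (eqU_sym H)); auto | apply (eqU_trans H); auto]. }
  apply C_ext; exact E.
Qed.

Lemma rep_cls x : eqU (rep (cls x)) x.
Proof.
pose proof (rep_spec (cls x)) as E; simpl in E.
apply eqU_sym; change ((fun P : X -> Prop => P (rep (cls x))) (eqU x)); rewrite E; apply eqU_refl.
Qed.

Lemma cls_rep c : cls (rep c) = c.
Proof.
apply C_ext; simpl; symmetry; apply rep_spec.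
Qed.

Definition UP : structure := Structure C
  (cls (fun i => s_zero (Ms i))) (cls (fun i => s_one (Ms i)))
  (fun c d => cls (fun i => s_add (Ms i) (rep c i) (rep d i)))
  (fun c d => cls (fun i => s_sub (Ms i) (rep c i) (rep d i)))
  (fun c d => cls (fun i => s_mul (Ms i) (rep c i) (rep d i)))
  (fun c d => cls (fun i => s_div (Ms i) (rep c i) (rep d i)))
  (fun a c => cls (fun i => s_scal (Ms i) a (rep c i)))
  (fun c d => U (fun i => s_lt (Ms i) (rep c i) (rep d i))).

Definition envi (E : nat -> C) (i : I) : nat -> carrier (Ms i) := fun n => rep (E n) i.

Lemma rep_cls_at (x : X) : U (fun i => rep (cls x) i = x i).
Proof. exact (rep_cls x). Qed.

Lemma cls_bin (f : forall i, carrier (Ms i) -> carrier (Ms i) -> carrier (Ms i)) (a b : X) :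
  cls (fun i => f i (rep (cls a) i) (rep (cls b) i)) = cls (fun i => f i (a i) (b i)).
Proof.
apply cls_eq; unfold eqU.
apply (UM (fun i => rep (cls a) i = a i /\ rep (cls b) i = b i)).
- intros i [h1 h2]; rewrite h1, h2; reflexivity.
- apply UI; apply rep_cls_at.
Qed.

Lemma cls_un (f : forall i, carrier (Ms i) -> carrier (Ms i)) (a : X) :
  cls (fun i => f i (rep (cls a) i)) = cls (fun i => f i (a i)).
Proof.
apply cls_eq; unfold eqU.
apply (UM (fun i => rep (cls a) i = a i)).
- intros i h1; rewrite h1; reflexivity.
- apply rep_cls_at.
Qed.

Lemma eval_los t E : eval_t UP E t = cls (fun i => eval_t (Ms i) (envi E i) t).
Proof.
induction t; simpl.
- unfold envi; rewrite cls_rep; reflexivity.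
- reflexivity.
- reflexivity.
- rewrite IHt1, IHt2; apply (cls_bin (fun i => s_add (Ms i))).
- rewrite IHt1, IHt2; apply (cls_bin (fun i => s_sub (Ms i))).
- rewrite IHt1, IHt2; apply (cls_bin (fun i => s_mul (Ms i))).
- rewrite IHt1, IHt2; apply (cls_bin (fun i => s_div (Ms i))).
- rewrite IHt; apply (cls_un (fun i => s_scal (Ms i) r)).
Qed.

Lemma envi_upd E x c i : envi (upd E x c) i = upd (envi E i) x (rep c i).
Proof.
apply functional_extensionality; intro n; unfold envi, upd.
destruct (Nat.eqb n x); reflexivity.
Qed.

Lemma choose_witness (A : forall i, carrier (Ms i) -> Prop) :
  U (fun i => exists v, A i v) -> exists c : C, U (fun i => A i (rep c i)).
Proof.
intro H.
pose (w := fun i => match excluded_middle_informative (exists v, A i v) with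
  | left h => proj1_sig (constructive_indefinite_description _ h)
  | right _ => s_zero (Ms i) end).
exists (cls w).
apply (UM (fun i => (exists v, A i v) /\ rep (cls w) i = w i)).
- intros i [Hi E]; rewrite E; unfold w.
  destruct (excluded_middle_informative _) as [h|h]; [|contradiction].
  destruct (constructive_indefinite_description _ h); assumption.
- apply UI; auto; apply rep_cls_at.
Qed.

Theorem los phi : forall E, holds UP E phi <-> U (fun i => holds (Ms i) (envi E i) phi).
Proof.
induction phi; intro E; simpl.
- rewrite !eval_los; rewrite cls_eq; reflexivity.
- rewrite !eval_los.
  set (a := fun i => eval_t (Ms i) (envi E i) t).
  set (b := fun i => eval_t (Ms i) (envi E i) t0).
  change (U (fun i => s_lt (Ms i) (rep (cls a) i) (rep (cls b) i)) <->
          U (fun i => s_lt (Ms i) (a i) (b i))).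
  pose proof (UI _ _ (rep_cls_at a) (rep_cls_at b)) as Hab.
  split; intro H.
  + apply (UM (fun i => (rep (cls a) i = a i /\ rep (cls b) i = b i) /\
        s_lt (Ms i) (rep (cls a) i) (rep (cls b) i))).
    * intros i [[H1 H2] H3]; rewrite <- H1, <- H2; exact H3.
    * apply UI; auto.
  + apply (UM (fun i => (rep (cls a) i = a i /\ rep (cls b) i = b i) /\
        s_lt (Ms i) (a i) (b i))).
    * intros i [[H1 H2] H3]; rewrite H1, H2; exact H3.
    * apply UI; auto.
- split; [intros []|intro H; exfalso; apply U0; exact H].
- rewrite IHphi1, IHphi2.
  set (A := fun i => holds (Ms i) (envi E i) phi1).
  set (B := fun i => holds (Ms i) (envi E i) phi2).
  change ((U A -> U B) <-> U (fun i => A i -> B i)).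
  split; intro H.
  + destruct (Uultra A) as [H1|H1].
    * apply (UM B); [intros i h _; exact h|auto].
    * apply (UM (fun i => ~ A i)); [intros i h h'; contradiction|auto].
  + intro H1; apply (UM (fun i => (A i -> B i) /\ A i)); [intros i [h h']; auto|apply UI; auto].
- rewrite IHphi1, IHphi2.
  set (A := fun i => holds (Ms i) (envi E i) phi1).
  set (B := fun i => holds (Ms i) (envi E i) phi2).
  change ((U A /\ U B) <-> U (fun i => A i /\ B i)).
  split; intro H.
  + apply UI; tauto.
  + split; [apply (UM (fun i => A i /\ B i)); [intros i h; apply h|auto]
           |apply (UM (fun i => A i /\ B i)); [intros i h; apply h|auto]].
- rewrite IHphi1, IHphi2.
  set (A := fun i => holds (Ms i) (envi E i) phi1).
  set (B := fun i => holds (Ms i) (envi E i) phi2).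
  change ((U A \/ U B) <-> U (fun i => A i \/ B i)).
  split; intro H.
  + destruct H as [H|H]; [apply (UM A)|apply (UM B)]; auto.
  + destruct (Uultra A) as [H1|H1]; [left; auto|right].
    apply (UM (fun i => ~ A i /\ (A i \/ B i))).
    * intros i [h1 [h2|h2]]; [contradiction|exact h2].
    * apply UI; auto.
- split; intro H.
  + destruct (Uultra (fun i => forall v, holds (Ms i) (upd (envi E i) n v) phi)) as [H1|H1]; auto.
    exfalso.
    assert (H2 : U (fun i => exists v, ~ holds (Ms i) (upd (envi E i) n v) phi)).
    { apply (UM (fun i => ~ forall v, holds (Ms i) (upd (envi E i) n v) phi)); auto.
      intros i h; apply not_all_ex_not; exact h. }
    destruct (choose_witness (fun i v => ~ holds (Ms i) (upd (envi E i) n v) phi) H2) as [c Hc].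
    specialize (H c); rewrite IHphi in H.
    apply U0; apply (UM (fun i => holds (Ms i) (envi (upd E n c) i) phi /\
       ~ holds (Ms i) (upd (envi E i) n (rep c i)) phi)).
    * intros i [h1 h2]; rewrite envi_upd in h1; contradiction.
    * apply UI; auto.
  + intro c; rewrite IHphi.
    apply (UM (fun i => forall v, holds (Ms i) (upd (envi E i) n v) phi)); auto.
    intros i h; rewrite envi_upd; apply h.
- split; intro H.
  + destruct H as [c Hc]; rewrite IHphi in Hc.
    apply (UM (fun i => holds (Ms i) (envi (upd E n c) i) phi)); auto.
    intros i h; rewrite envi_upd in h; exists (rep c i); exact h.
  + destruct (choose_witness (fun i v => holds (Ms i) (upd (envi E i) n v) phi) H) as [c Hc].
    exists c; rewrite IHphi.
    apply (UM (fun i => holds (Ms i) (upd (envi E i) n (rep c i)) phi)); auto.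
    intros i h; rewrite envi_upd; exact h.
Qed.

End Ultra.

From mathcomp Require Import all_boot all_algebra.
From mathcomp Require Import polyrcf qe_rcf_th ordered_qelim qe_rcf.
Set Implicit Arguments.
Unset Strict Implicit.
Unset Printing Implicit Defensive.
Import GRing.Theory Num.Theory.
Local Open Scope ring_scope.

Section Inv.
Variable F : rcfType.
Variable P : F -> Prop.
Hypothesis P0 : P 0.
Hypothesis P1 : P 1.
Hypothesis PN : forall x, P x -> P (- x).
Hypothesis PD : forall x y, P x -> P y -> P (x + y).
Hypothesis PM : forall x y, P x -> P y -> P (x * y).
Hypothesis PV : forall x, P x -> P (x^-1).
Hypothesis Prat : forall q : rat, P (ratr q).

Fixpoint qok (t : qe_rcf.term F) : Prop :=
  match t with
  | qe_rcf.Var _ | qe_rcf.NatConst _ => Logic.True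
  | qe_rcf.Const c => P c
  | qe_rcf.Add u v | qe_rcf.Mul u v => qok u /\ qok v
  | qe_rcf.Opp u | qe_rcf.NatMul u _ | qe_rcf.Exp u _ => qok u
  end.

Fixpoint qfok (f : qe_rcf.formula F) : Prop :=
  match f with
  | qe_rcf.Bool _ => Logic.True
  | qe_rcf.Equal u v | qe_rcf.Lt u v | qe_rcf.Le u v => qok u /\ qok v
  | qe_rcf.And f g | qe_rcf.Or f g | qe_rcf.Implies f g => qfok f /\ qfok g
  | qe_rcf.Not f => qfok f
  end.

Fixpoint pok (p : seq (qe_rcf.term F)) : Prop :=
  match p with [::] => Logic.True | t :: p => qok t /\ pok p end.

Fixpoint spok (s : seq (seq (qe_rcf.term F))) : Prop :=
  match s with [::] => Logic.True | t :: p => pok t /\ spok p end.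

Ltac okt := repeat (match goal with
  | |- _ /\ _ => split
  | |- _ -> _ => intro
  | |- Logic.True => exact Logic.I
  | H : _ /\ _ |- _ => destruct H
  | |- _ => progress simpl
  end); try assumption; auto.

Lemma If_ok a b c : qfok a -> qfok b -> qfok c -> qfok (If a b c).
Proof. by move=> *; rewrite /If; okt. Qed.

Lemma Size_ok p k : pok p -> (forall n, qfok (k n)) -> qfok (Size p k).
Proof.
elim: p k => [|c p IH] k /= Hp Hk; first exact: Hk.
case: Hp => Hc Hp; apply: IH => // -[|n] //; apply: If_ok; okt.
Qed.


Lemma Isnull_ok p k : pok p -> (forall b, qfok (k b)) -> qfok (Isnull p k).
Proof. by move=> Hp Hk; apply: Size_ok. Qed.

Lemma LtSize_ok p q k : pok p -> pok q -> (forall b, qfok (k b)) -> qfok (LtSize p q k).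
Proof. by move=> Hp Hq Hk; apply: Size_ok => // n; apply: Size_ok. Qed.

Lemma LeadCoef_ok p k : pok p -> (forall t, qok t -> qfok (k t)) -> qfok (LeadCoef p k).
Proof.
elim: p k => [|c p IH] k /= Hp Hk; first exact: Hk.
case: Hp => Hc Hp; apply: IH => // l Hl; apply: If_ok; okt.
Qed.

Lemma AmulXn_ok a n : qok a -> pok (AmulXn a n).
Proof. by elim: n => [|n IH] /=; okt. Qed.

Lemma AddPoly_ok p q : pok p -> pok q -> pok (AddPoly p q).
Proof.
elim: p q => [|a p IH] [|b q] //= [Ha Hp] [Hb Hq]; okt.
Qed.

Lemma ScalPoly_ok c p : qok c -> pok p -> pok (ScalPoly c p).
Proof. by move=> Hc; elim: p => [|a p IH] //= [Ha Hp]; okt. Qed.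

Lemma MulPoly_ok p q : pok p -> pok q -> pok (MulPoly p q).
Proof.
elim: p => [|a p IH] //= [Ha Hp] Hq; apply: AddPoly_ok; first exact: ScalPoly_ok.
by simpl; okt.
Qed.

Lemma ExpPoly_ok p n : pok p -> pok (ExpPoly p n).
Proof.
move=> Hp; rewrite /ExpPoly; case: n => [|n] /=; first by okt.
elim: n => [|n IH] //=; exact: MulPoly_ok.
Qed.

Lemma OppPoly_ok p : pok p -> pok (OppPoly p).
Proof. by move=> Hp; apply: ScalPoly_ok => //=; apply: PN. Qed.

Lemma NatMulPoly_ok n p : pok p -> pok (NatMulPoly n p).
Proof. by move=> Hp; apply: ScalPoly_ok. Qed.

Lemma Deriv_ok p : pok p -> pok (Deriv p).
Proof.
elim: p => [|a p IH] //= [Ha Hp]; apply: AddPoly_ok => //=; okt.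
Qed.

Lemma Rediv_rec_loop_ok q sq cq c qq r n k :
  pok q -> qok cq -> pok qq -> pok r ->
  (forall c qq r, pok qq -> pok r -> qfok (k (c, qq, r))) ->
  qfok (Rediv_rec_loop q sq cq c qq r n k).
Proof.
elim: n c qq r => [|n IH] c qq r Hq Hcq Hqq Hr Hk /=;
  apply: Size_ok => // sr; case: ifP => _; try exact: Hk;
  apply: LeadCoef_ok => // lr Hlr.
- apply: Hk.
  + apply: AddPoly_ok; [apply: MulPoly_ok => //=; okt | exact: AmulXn_ok].
  + apply: AddPoly_ok; [apply: MulPoly_ok => //=; okt | ].
    apply: OppPoly_ok; apply: MulPoly_ok => //; exact: AmulXn_ok.
- apply: IH => //.
  + apply: AddPoly_ok; [apply: MulPoly_ok => //=; okt | exact: AmulXn_ok].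
  + apply: AddPoly_ok; [apply: MulPoly_ok => //=; okt | ].
    apply: OppPoly_ok; apply: MulPoly_ok => //; exact: AmulXn_ok.
Qed.

Lemma Rediv_ok p q k : pok p -> pok q ->
  (forall c qq r, pok qq -> pok r -> qfok (k (c, qq, r))) ->
  qfok (Rediv p q k).
Proof.
move=> Hp Hq Hk; rewrite /Rediv; apply: Isnull_ok => // -[].
  by apply: Hk => //=; okt.
apply: Size_ok => // sq; apply: Size_ok => // sp; apply: LeadCoef_ok => // lq Hlq.
by apply: Rediv_rec_loop_ok => //=; okt.
Qed.

Lemma Rmod_ok p q k : pok p -> pok q -> (forall r, pok r -> qfok (k r)) ->
  qfok (Rmod p q k).
Proof. by move=> Hp Hq Hk; apply: Rediv_ok => // c qq r _ Hr; apply: Hk. Qed.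

Lemma Rscal_ok p q k : pok p -> pok q -> (forall n, qfok (k n)) ->
  qfok (Rscal p q k).
Proof. by move=> Hp Hq Hk; apply: Rediv_ok. Qed.

Lemma Rgcd_loop_ok n pp qq k : pok pp -> pok qq -> (forall r, pok r -> qfok (k r)) ->
  qfok (Rgcd_loop n pp qq k).
Proof.
elim: n pp qq => [|n IH] pp qq Hp Hq Hk /=; apply: Rmod_ok => // r Hr;
  apply: Isnull_ok => // -[]; try exact: Hk.
exact: IH.
Qed.

Lemma Rgcd_ok p q k : pok p -> pok q -> (forall r, pok r -> qfok (k r)) ->
  qfok (Rgcd p q k).
Proof.
move=> Hp Hq Hk; rewrite /Rgcd; apply: LtSize_ok => // -[];
  apply: Isnull_ok => // -[]; try exact: Hk;
  apply: Size_ok => // n; exact: Rgcd_loop_ok.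
Qed.

Lemma BigRgcd_ok ps k : spok ps -> (forall r, pok r -> qfok (k r)) ->
  qfok (BigRgcd ps k).
Proof.
elim: ps k => [|p ps IH] k /= Hps Hk; first by apply: Hk; okt.
case: Hps => Hp Hps; apply: IH => // r Hr; exact: Rgcd_ok.
Qed.

Lemma Changes_ok s k : pok s -> (forall n, qfok (k n)) -> qfok (Changes s k).
Proof.
elim: s k => [|a s IH] k /= Hs Hk; first exact: Hk.
case: Hs => Ha Hs; apply: IH => // v; apply: If_ok => //=; split => //.
split => //; case: s Hs => //= b s [Hb _]; okt.
Qed.

Lemma SeqPInfty_ok ps k : spok ps -> (forall r, pok r -> qfok (k r)) ->
  qfok (SeqPInfty ps k).
Proof.
elim: ps k => [|p ps IH] k /= Hps Hk; first exact: Hk.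
case: Hps => Hp Hps; apply: LeadCoef_ok => // lp Hlp; apply: IH => // r Hr.
by apply: Hk; okt.
Qed.

Lemma SeqMInfty_ok ps k : spok ps -> (forall r, pok r -> qfok (k r)) ->
  qfok (SeqMInfty ps k).
Proof.
elim: ps k => [|p ps IH] k /= Hps Hk; first exact: Hk.
case: Hps => Hp Hps; apply: LeadCoef_ok => // lp Hlp; apply: Size_ok => // sp.
apply: IH => // r Hr; apply: Hk => /=; okt.
Qed.

Lemma ChangesPoly_ok ps k : spok ps -> (forall n, qfok (k n)) ->
  qfok (ChangesPoly ps k).
Proof.
move=> Hps Hk; rewrite /ChangesPoly; apply: SeqMInfty_ok => // m Hm.
apply: SeqPInfty_ok => // pp Hpp; apply: Changes_ok => // vm.
exact: Changes_ok.
Qed.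

Lemma NextMod_ok p q k : pok p -> pok q -> (forall r, pok r -> qfok (k r)) ->
  qfok (NextMod p q k).
Proof.
move=> Hp Hq Hk; rewrite /NextMod; apply: LeadCoef_ok => // lq Hlq.
apply: Rscal_ok => // spq; apply: Rmod_ok => // rpq Hr; apply: Hk.
by apply: ScalPoly_ok => //=.
Qed.

Lemma ModsAux_ok p q n k : pok p -> pok q -> (forall r, spok r -> qfok (k r)) ->
  qfok (ModsAux p q n k).
Proof.
elim: n p q k => [|n IH] p q k Hp Hq Hk /=; first exact: Hk.
apply: Isnull_ok => // -[]; first exact: Hk.
apply: NextMod_ok => // npq Hn; apply: IH => // ps Hps; apply: Hk; okt.
Qed.

Lemma Mods_ok p q k : pok p -> pok q -> (forall r, spok r -> qfok (k r)) ->
  qfok (Mods p q k).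
Proof.
move=> Hp Hq Hk; rewrite /Mods; apply: Size_ok => // sp; apply: Size_ok => // sq.
exact: ModsAux_ok.
Qed.


Lemma nth_pok s i : spok s -> pok (nth [::] s i).
Proof. by elim: s i => [|p s IH] [|i] //= [Hp Hs] //; exact: IH. Qed.

Lemma reduce_Mul_ok I (r : seq I) (G : I -> seq (qe_rcf.term F)) :
  (forall i, pok (G i)) ->
  pok (reducebig [:: (1%:R)%qfT] r (fun i => BigBody i (@MulPoly F) true (G i))).
Proof.
move=> HG; elim: r => [|i r IH] /=; first by okt.
exact: MulPoly_ok.
Qed.

Lemma PolyComb_ok sq sc : spok sq -> pok (PolyComb sq sc).
Proof.
move=> Hs; rewrite /PolyComb; apply: reduce_Mul_ok => i.
apply: ExpPoly_ok; exact: nth_pok.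
Qed.

Lemma Pcq_ok sq i : spok sq -> pok (Pcq sq i).
Proof.
move=> Hs; rewrite /Pcq; apply: nth_pok.
by elim: (sg_tab (size sq)) => [|a l IH] //=; split => //; apply: PolyComb_ok.
Qed.

Lemma TaqR_ok p q k : pok p -> pok q -> (forall n, qfok (k n)) -> qfok (TaqR p q k).
Proof.
move=> Hp Hq Hk; rewrite /TaqR; apply: Mods_ok => //.
  by apply: MulPoly_ok => //; apply: Deriv_ok.
by move=> r Hr; apply: ChangesPoly_ok.
Qed.

Lemma Pint (z : int) : P (z%:~R).
Proof. by rewrite -[z%:~R](ratr_int F z); apply: Prat. Qed.

Lemma Pnat (n : nat) : P (n%:R).
Proof. by rewrite -[n%:R](ratr_nat F n); apply: Prat. Qed.

Lemma TaqsR_ok p sq i k : pok p -> spok sq -> (forall t, qok t -> qfok (k t)) ->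
  qfok (TaqsR p sq i k).
Proof.
move=> Hp Hs Hk; rewrite /TaqsR; apply: TaqR_ok => //; first exact: Pcq_ok.
by move=> n; apply: Hk => /=; apply: Pint.
Qed.

Lemma BoundingPoly_ok sq : spok sq -> pok (BoundingPoly sq).
Proof.
move=> Hs; rewrite /BoundingPoly; apply: Deriv_ok.
elim: sq Hs => [|a l IH] Hs; first by simpl; okt.
case: Hs => Ha Hl; apply: MulPoly_ok => //; exact: IH.
Qed.

Lemma coefs_ok n i : P (coefs F n i).
Proof.
rewrite /coefs.
have Hall : forall j, P ((castmx (erefl _, exp3n n)
    (invmx (map_mx ((intmul 1) : int -> F) (ctmat n)))) j ord0).
  move=> j; rewrite castmxE /=.
  have -> : map_mx ((intmul 1) : int -> F) (ctmat n) =
    map_mx (@ratr F) (map_mx ((intmul 1) : int -> rat) (ctmat n)).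
    by rewrite -map_mx_comp; apply/matrixP => a b; rewrite !mxE /= ratr_int.
  rewrite -map_invmx mxE; exact: Prat.
elim: (enum _) i => [|a l IH] [|i] /=; try exact: P0; first exact: Hall.
exact: IH.
Qed.

Lemma Coefs_ok n i : qok (Coefs F n i).
Proof.
rewrite /Coefs /=; case: n => [|[|n]]; first exact: Pnat.
  case: i => [|[|[|i]]] /=; try exact: P0; try (apply: PV; exact: Pnat).
  by rewrite nth_nil.
exact: coefs_ok.
Qed.

Lemma CcountWeak_ok p sq k : pok p -> spok sq -> (forall t, qok t -> qfok (k t)) ->
  qfok (CcountWeak p sq k).
Proof.
move=> Hp Hs; rewrite /CcountWeak.
have : qok (0%:R)%qfT by [].
move: (0%:R)%qfT (3 ^ size sq)%N k.
move=> s0 n; elim: n s0 => [|n IH] s0 k Hs0 Hk /=; first exact: Hk.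
apply: TaqsR_ok => // x Hx; apply: IH => //=; okt; exact: Coefs_ok.
Qed.

Lemma reduce_And_ok (r : seq (seq (qe_rcf.term F))) (G : seq (qe_rcf.term F) -> qe_rcf.formula F) :
  (forall i, pok i -> qfok (G i)) -> spok r ->
  qfok (reducebig (qe_rcf.Bool true) r (fun i => BigBody i qe_rcf.And true (G i))).
Proof.
move=> HG; elim: r => [|i r IH] //= [Hi Hr]; split; [exact: HG | exact: IH].
Qed.

Lemma CcountGt0_ok sp sq : spok sp -> spok sq -> qfok (CcountGt0 sp sq).
Proof.
move=> Hp Hq; rewrite /CcountGt0; apply: BigRgcd_ok => // p Hpp.
apply: Isnull_ok => // -[] /=.
  apply: CcountWeak_ok => //; first exact: BoundingPoly_ok.
  move=> cw Hcw /=; split; [|split].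
  - apply: reduce_And_ok => // q Hq'; apply: LeadCoef_ok => // lq Hlq; okt.
  - apply: reduce_And_ok => // q Hq'; apply: Size_ok => // n.
    apply: LeadCoef_ok => // lq Hlq; okt.
  - okt.
by apply: CcountWeak_ok => // c Hc; okt.
Qed.

Lemma abstrX_ok i t : qok t -> pok (abstrX i t).
Proof.
elim: t => [n|c|n|u Hu v Hv|u Hu|u Hu n|u Hu v Hv|u Hu n] Ht; simpl abstrX.
- by case: ifP => _; simpl; okt.
- by simpl; okt.
- by simpl; okt.
- by case: Ht => ? ?; apply: AddPoly_ok; [apply: Hu | apply: Hv].
- by apply: OppPoly_ok; apply: Hu.
- by apply: NatMulPoly_ok; apply: Hu.
- by case: Ht => ? ?; apply: MulPoly_ok; [apply: Hu | apply: Hv].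
- by apply: ExpPoly_ok; apply: Hu.
Qed.

Fixpoint gok (t : GRing.term F) : Prop :=
  match t with
  | GRing.Var _ | GRing.NatConst _ => Logic.True
  | GRing.Const c => P c
  | GRing.Add u v | GRing.Mul u v => gok u /\ gok v
  | GRing.Opp u | GRing.NatMul u _ | GRing.Exp u _ | GRing.Inv u => gok u
  end.

Fixpoint gsok (s : seq (GRing.term F)) : Prop :=
  match s with [::] => Logic.True | t :: p => gok t /\ gsok p end.

Lemma to_rterm_ok t : gok t -> qok (qe_rcf.to_rterm t).
Proof. by elim: t => //= *; okt. Qed.

Lemma map_abstrX_ok i s : gsok s -> spok (map (abstrX i \o qe_rcf.to_rterm) s).
Proof.
elim: s => [|t s IH] //= [Ht Hs]; split; last exact: IH.
apply: abstrX_ok; exact: to_rterm_ok.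
Qed.

Lemma wproj_ok n s : gsok s.1 -> gsok s.2 -> qfok (wproj n s).
Proof.
move=> H1 H2; rewrite /wproj; apply: CcountGt0_ok; exact: map_abstrX_ok.
Qed.


Fixpoint ofok (f : ord.formula F) : Prop :=
  match f with
  | ord.Bool _ => Logic.True
  | ord.Equal u v | ord.Lt u v | ord.Le u v => gok u /\ gok v
  | ord.Unit u => gok u
  | ord.And f g | ord.Or f g | ord.Implies f g => ofok f /\ ofok g
  | ord.Not f | ord.Exists _ f | ord.Forall _ f => ofok f
  end.

Lemma rterm_to_term_ok t : qok t -> gok (qe_rcf.rterm_to_term t).
Proof. by elim: t => //= *; okt. Qed.

Lemma qfr_ok f : qfok f -> ofok (qe_rcf.qfr_to_formula f).
Proof. by elim: f => //= *; okt; apply: rterm_to_term_ok. Qed.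

Lemma gto_rterm_ok t r n : gok t -> gsok r ->
  gok (GRing.to_rterm t r n).1 /\ gsok (GRing.to_rterm t r n).2.
Proof.
have gsok_rcons : forall r x, gsok r -> gok x -> gsok (rcons r x).
  by elim=> [|a l IH] x /= ; okt; apply: IH.
elim: t r => //=.
- move=> u Hu v Hv r [Hu' Hv'] Hr.
  case: (Hu r Hu' Hr); case: (GRing.to_rterm u r n) => u' r1 /= H1 H2.
  case: (Hv r1 Hv' H2); case: (GRing.to_rterm v r1 n) => v' r2 /= H3 H4; okt.
- move=> u Hu r Hu' Hr.
  case: (Hu r Hu' Hr); case: (GRing.to_rterm u r n) => u' r1 /= H1 H2; okt.
- move=> u Hu m r Hu' Hr.
  case: (Hu r Hu' Hr); case: (GRing.to_rterm u r n) => u' r1 /= H1 H2; okt.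
- move=> u Hu v Hv r [Hu' Hv'] Hr.
  case: (Hu r Hu' Hr); case: (GRing.to_rterm u r n) => u' r1 /= H1 H2.
  case: (Hv r1 Hv' H2); case: (GRing.to_rterm v r1 n) => v' r2 /= H3 H4; okt.
- move=> u Hu r Hu' Hr.
  case: (Hu r Hu' Hr); case: (GRing.to_rterm u r n) => u' r1 /= H1 H2; okt.
- move=> u Hu m r Hu' Hr.
  case: (Hu r Hu' Hr); case: (GRing.to_rterm u r n) => u' r1 /= H1 H2; okt.
Qed.

Lemma eq0_rform_ok t : gok t -> ofok (ord.eq0_rform t).
Proof.
move=> Ht; rewrite /ord.eq0_rform.
case: (gto_rterm_ok (GRing.ub_var t) Ht (r:=[::]) Logic.I).
case: (GRing.to_rterm t [::] _) => t' r /= H1 H2.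
elim: r H2 (GRing.ub_var t) => [|a r IH] /= H2 m; first by okt.
case: H2 => Ha Hr; okt; exact: IH.
Qed.

Lemma lt0_rform_ok t : gok t -> ofok (ord.lt0_rform t).
Proof.
move=> Ht; rewrite /ord.lt0_rform.
case: (gto_rterm_ok (GRing.ub_var t) Ht (r:=[::]) Logic.I).
case: (GRing.to_rterm t [::] _) => t' r /= H1 H2.
elim: r H2 (GRing.ub_var t) => [|a r IH] /= H2 m; first by okt.
case: H2 => Ha Hr; okt; exact: IH.
Qed.

Lemma leq0_rform_ok t : gok t -> ofok (ord.leq0_rform t).
Proof.
move=> Ht; rewrite /ord.leq0_rform.
case: (gto_rterm_ok (GRing.ub_var t) Ht (r:=[::]) Logic.I).
case: (GRing.to_rterm t [::] _) => t' r /= H1 H2.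
elim: r H2 (GRing.ub_var t) => [|a r IH] /= H2 m; first by okt.
case: H2 => Ha Hr; okt; exact: IH.
Qed.

Lemma to_rform_ok f : ofok f -> ofok (ord.to_rform f).
Proof.
elim: f => //=.
- by move=> u v [Hu Hv]; apply: eq0_rform_ok; okt.
- by move=> u v [Hu Hv]; apply: lt0_rform_ok; okt.
- by move=> u v [Hu Hv]; apply: leq0_rform_ok; okt.
- by move=> u Hu; apply: eq0_rform_ok; okt.
- by move=> f Hf g Hg [? ?]; okt.
- by move=> f Hf g Hg [? ?]; okt.
- by move=> f Hf g Hg [? ?]; okt.
Qed.

Definition ocok (c : ord.oclause F) : Prop :=
  match c with ord.Oclause a b d e => gsok a /\ gsok b /\ gsok d /\ gsok e end.
Arguments ocok c /.

Fixpoint ocsok (s : seq (ord.oclause F)) : Prop :=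
  match s with [::] => Logic.True | c :: s => ocok c /\ ocsok s end.

Lemma gsok_cat a b : gsok a -> gsok b -> gsok (a ++ b).
Proof. by elim: a => [|x a IH] //= [? ?]; okt. Qed.

Lemma ocsok_cat a b : ocsok a -> ocsok b -> ocsok (a ++ b).
Proof. by elim: a => [|x a IH] //= [? ?]; okt. Qed.

Lemma and_odnf_ok a b : ocsok a -> ocsok b -> ocsok (ord.and_odnf a b).
Proof.
move=> Ha Hb; rewrite /ord.and_odnf.
elim: a Ha => [|c a IH] /= Ha; first by rewrite big_nil.
rewrite big_cons; case: Ha => Hc Ha; apply: ocsok_cat; last exact: IH.
elim: b Hb {IH} => [|d b IH] //= [Hd Hb]; split; last exact: IH.
clear IH; case: c Hc => a1 a2 a3 a4 [H1 [H2 [H3 H4]]]; case: d Hd => b1 b2 b3 b4 [G1 [G2 [G3 G4]]].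
by simpl; okt; apply: gsok_cat.
Qed.

Lemma qf_to_odnf_ok f neg : ofok f -> ocsok (ord.qf_to_odnf f neg).
Proof.
elim: f neg => //=.
- by move=> b neg _; case: (b (+) neg).
- by move=> u v neg [Hu Hv]; case: neg; okt.
- by move=> u v neg [Hu Hv]; case: neg; okt.
- by move=> u v neg [Hu Hv]; case: neg; okt.
- by move=> u neg Hu; case: neg; okt.
- move=> f Hf g Hg neg [H1 H2]; case: neg => /=.
    by apply: ocsok_cat; [apply: Hf | apply: Hg].
  by apply: and_odnf_ok; [apply: Hf | apply: Hg].
- move=> f Hf g Hg neg [H1 H2]; case: neg => /=.
    by apply: and_odnf_ok; [apply: Hf | apply: Hg].
  by apply: ocsok_cat; [apply: Hf | apply: Hg].
- move=> f Hf g Hg neg [H1 H2]; case: neg => /=.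
    by apply: and_odnf_ok; [apply: Hf | apply: Hg].
  by apply: ocsok_cat; [apply: Hf | apply: Hg].
- by move=> f Hf neg H; apply: Hf.
- by move=> n f Hf neg _; case: neg; okt.
- by move=> n f Hf neg _; case: neg; okt.
Qed.

Fixpoint fa {A : Type} (Q : A -> Prop) (s : seq A) : Prop :=
  match s with [::] => Logic.True | x :: s => Q x /\ fa Q s end.

Lemma fa_cat A (Q : A -> Prop) a b : fa Q a -> fa Q b -> fa Q (a ++ b).
Proof. by elim: a => [|x a IH] //= [? ?]; split => //; apply: IH. Qed.

Lemma fa_map A B (Q : B -> Prop) (f : A -> B) s :
  fa (fun x => Q (f x)) s -> fa Q (map f s).
Proof. by elim: s => [|x s IH] //= [? ?]; split => //; apply: IH. Qed.

Lemma fa_flatten A (Q : A -> Prop) s : fa (fa Q) s -> fa Q (flatten s).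
Proof. by elim: s => [|x s IH] //= [? ?]; apply: fa_cat => //; apply: IH. Qed.

Lemma fa_impl A (Q Q' : A -> Prop) s : (forall x, Q x -> Q' x) -> fa Q s -> fa Q' s.
Proof. by move=> H; elim: s => [|x s IH] //= [? ?]; split; auto. Qed.

Lemma leq_elim_aux_ok a b c : gsok a -> gsok b -> gsok c ->
  fa (fun x => gsok x.1 /\ gsok x.2) (ord.leq_elim_aux a b c).
Proof.
move=> Ha Hb; elim: c => [|t c IH] /=; first by okt.
move=> [Ht Hc]; have H := IH Hc; apply: fa_cat; apply: fa_map;
  apply: (fa_impl _ H) => x [? ?] /=; okt.
Qed.

Lemma neq_elim_aux_ok a b : gsok a -> gsok b -> fa gsok (ord.neq_elim_aux a b).
Proof.
move=> Ha; elim: b => [|t b IH] /=; first by okt.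
move=> [Ht Hb]; have H := IH Hb; apply: fa_cat; apply: fa_map;
  apply: (fa_impl _ H) => x ? /=; okt.
Qed.

Lemma oclause_to_w_ok c : ocok c ->
  fa (fun x => gsok x.1 /\ gsok x.2) (ord.oclause_to_w c).
Proof.
case: c => a b d e [Ha [Hb [Hd He]]].
rewrite /ord.oclause_to_w /ord.oclause_neq_leq_elim; apply: fa_map.
apply: fa_flatten; apply: fa_map; rewrite /ord.oclause_leq_elim; apply: fa_map.
apply: (fa_impl _ (leq_elim_aux_ok Ha Hd He)) => [[x1 x2]] [H1 H2] /=.
apply: fa_map; apply: (fa_impl _ (neq_elim_aux_ok H2 Hb)) => y Hy /=; okt.
Qed.

Lemma foldr_Or_ok (s : seq (ord.formula F)) :
  fa ofok s -> ofok (foldr ord.Or ord.False s).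
Proof. by elim: s => [|x s IH] //= [? ?]; split => //; apply: IH. Qed.

Lemma proj_ok n c : ocok c -> ofok (ord.proj (fun n s => qe_rcf.qfr_to_formula (@wproj F n s)) n c).
Proof.
move=> Hc; rewrite /ord.proj; apply: foldr_Or_ok; apply: fa_map.
apply: (fa_impl _ (oclause_to_w_ok Hc)) => y [? ?]; apply: qfr_ok; exact: wproj_ok.
Qed.

Lemma ocsok_fa s : ocsok s -> fa ocok s.
Proof. by elim: s => [|x s IH] //= [? ?]; split => //; apply: IH. Qed.

Lemma quantifier_elim_ok f : ofok f ->
  ofok (ord.quantifier_elim (fun n s => qe_rcf.qfr_to_formula (@wproj F n s)) f).
Proof.
have aux : forall g n neg, ofok g -> ofok (foldr ord.Or ord.False
    [seq ord.proj (fun n s => qe_rcf.qfr_to_formula (@wproj F n s)) n i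
       | i <- ord.qf_to_odnf g neg]).
  move=> g n neg Hg; apply: foldr_Or_ok; apply: fa_map.
  apply: (fa_impl _ (ocsok_fa (qf_to_odnf_ok neg Hg))) => y Hy; exact: proj_ok.
elim: f => //=.
- by move=> f Hf g Hg [? ?]; okt.
- by move=> f Hf g Hg [? ?]; okt.
- by move=> f Hf g Hg [? ?]; okt.
- by move=> n f Hf H; apply: aux; apply: Hf.
- by move=> n f Hf H; apply: aux; apply: Hf.
Qed.

End Inv.

From mathcomp Require Import all_order.
From mathcomp Require Import Rstruct.
Import Order.TTheory GRing.Theory Num.Theory.

Notation RR := Rdefinitions.R.

Definition alg (x : RR) : Prop := algebraicOver (@ratr RR) x.

Lemma alg0 : alg 0. Proof. exact: algebraic0. Qed.
Lemma alg1 : alg 1. Proof. exact: algebraic1. Qed.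
Lemma algN x : alg x -> alg (- x). Proof. exact: algebraic_opp. Qed.
Lemma algD x y : alg x -> alg y -> alg (x + y). Proof. exact: algebraic_add. Qed.
Lemma algM x y : alg x -> alg y -> alg (x * y). Proof. exact: algebraic_mul. Qed.
Lemma algV x : alg x -> alg (x^-1). Proof. exact: algebraic_inv. Qed.
Lemma algrat q : alg (ratr q). Proof. exact: algebraic_id. Qed.
Lemma algint (z : int) : alg (z%:~R). Proof. by rewrite -(ratr_int RR z); apply: algrat. Qed.
Lemma algnat (n : nat) : alg (n%:R). Proof. by rewrite -(ratr_nat RR n); apply: algrat. Qed.

Ltac algs := first [exact: alg0 | exact: alg1 | exact: algN | exact: algD
  | exact: algM | exact: algV | exact: algrat].

Lemma alg_root (p : {poly RR}) x :
  p != 0 -> (forall k, alg p`_k) -> root p x -> alg x.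
Proof.
move=> p0 Hp r; apply/integral_algebraic; apply: (integral_root p0 r).
move=> z /(nthP 0) [k _ <-]; apply/integral_algebraic; exact: Hp.
Qed.

Lemma qeval_alg (e : seq RR) t : (forall j, alg e`_j) -> qok alg t -> alg (qe_rcf.eval e t).
Proof.
move=> He; elim: t => //=.
- by move=> n _; apply: algnat.
- by move=> u Hu v Hv [/Hu ? /Hv ?]; apply: algD.
- by move=> u Hu /Hu; apply: algN.
- move=> u Hu n /Hu Hu'; elim: n => [|n IH]; first by rewrite mulr0n; apply: alg0.
  by rewrite mulrS; apply: algD.
- by move=> u Hu v Hv [/Hu ? /Hv ?]; apply: algM.
- move=> u Hu n /Hu Hu'; elim: n => [|n IH]; first by rewrite expr0; apply: alg1.
  by rewrite exprS; apply: algM.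
Qed.

Lemma pok_coef (e : seq RR) s : (forall j, alg e`_j) -> pok alg s ->
  forall k, alg (eval_poly e s)`_k.
Proof.
move=> He Hs k; rewrite eval_polyP coef_Poly.
elim: s Hs k => [|t s IH] /= Hs k; first by rewrite nth_nil; apply: alg0.
case: Hs => Ht Hs; case: k => [|k] /=; first exact: qeval_alg.
exact: IH.
Qed.

Lemma term_poly (e : seq RR) i (t : GRing.term RR) :
  (forall j, alg e`_j) -> GRing.rterm t -> gok alg t ->
  exists p : {poly RR}, (forall k, alg p`_k) /\
    forall x, p.[x] = GRing.eval (set_nth 0 e i x) t.
Proof.
move=> He rt Ht; exists (eval_poly e (abstrX i (qe_rcf.to_rterm t))); split.
  apply: pok_coef => //; apply: (@abstrX_ok RR alg); try algs.
  exact: to_rterm_ok.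
by move=> x; rewrite abstrXP evalE to_rtermE.
Qed.

From mathcomp Require Import lra.
From Stdlib Require Import Classical.

Fixpoint exf {A : Type} (Q : A -> Prop) (s : seq A) : Prop :=
  match s with [::] => Logic.False | x :: s => Q x \/ exf Q s end.

Definition cholds (e : seq RR) (bc : ord.oclause RR) : Prop :=
  match bc with ord.Oclause a b c d =>
    fa (fun t => GRing.eval e t = 0) a /\ fa (fun t => GRing.eval e t <> 0) b /\
    fa (fun t => 0 < GRing.eval e t) c /\ fa (fun t => 0 <= GRing.eval e t) d end.

Lemma odnf_eval e bcs : ord.qf_eval e (ord.odnf_to_oform bcs) <-> exf (cholds e) bcs.
Proof.
have Hpos l : ord.qf_eval e (foldr (fun t => ord.And (ord.Equal t 0%T)) ord.True l)
   <-> fa (fun t => GRing.eval e t = 0) l.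
  elim: l => [|t l IH] //=; rewrite -IH; split; first by case/andP => /eqP.
  by case=> -> ->; rewrite eqxx.
have Hneg l : ord.qf_eval e (foldr (fun t => ord.And (ord.Not (ord.Equal t 0%T))) ord.True l)
   <-> fa (fun t => GRing.eval e t <> 0) l.
  elim: l => [|t l IH] //=; rewrite -IH; split; first by case/andP => /eqP.
  by case=> /eqP -> ->.
have Hlt l : ord.qf_eval e (foldr (fun t => ord.And (ord.Lt 0%T t)) ord.True l)
   <-> fa (fun t => 0 < GRing.eval e t) l.
  elim: l => [|t l IH] //=; rewrite -IH; split; first by case/andP.
  by case=> -> ->.
have Hle l : ord.qf_eval e (foldr (fun t => ord.And (ord.Le 0%T t)) ord.True l)
   <-> fa (fun t => 0 <= GRing.eval e t) l.
  elim: l => [|t l IH] //=; rewrite -IH; split; first by case/andP.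
  by case=> -> ->.
elim: bcs => [|[a b c d] bcs IH] //=.
rewrite -IH -Hpos -Hneg -Hlt -Hle; split.
  by case/orP => [/and4P [-> -> -> ->]|->]; [left|right].
by case=> [[-> [-> [-> ->]]]|->]; rewrite ?orbT.
Qed.


Lemma near_fa (x : RR) (C : GRing.term RR -> RR -> Prop) s :
  fa (fun t => exists2 d : RR, 0 < d & forall y, `|y - x| < d -> C t y) s ->
  exists2 d : RR, 0 < d & forall y, `|y - x| < d -> fa (fun t => C t y) s.
Proof.
elim: s => [|t s IH] /=; first by move=> _; exists 1 => //; rewrite ltr01.
case=> [[d1 d1p H1] /IH [d2 d2p H2]]; exists (Num.min d1 d2).
  by rewrite lt_min d1p d2p.
move=> y; rewrite lt_min => /andP [y1 y2]; split; [exact: H1 | exact: H2].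
Qed.

Lemma poly_zero_trans (p : {poly RR}) x : ~ alg x -> (forall k, alg p`_k) ->
  p.[x] = 0 -> p = 0.
Proof.
move=> nx Hp px; apply/eqP; apply/negPn/negP => p0; apply: nx.
by apply: (alg_root p0 Hp); apply/rootP.
Qed.

Lemma poly_pos_near (p : {poly RR}) x : 0 < p.[x] ->
  exists2 d : RR, 0 < d & forall y, `|y - x| < d -> 0 < p.[y].
Proof.
move=> px; have [d d0 Hd] := poly_cont x p px; exists d => // y /Hd.
rewrite ltr_norml => /andP [h1 h2]; lra.
Qed.

Lemma poly_neq_near (p : {poly RR}) x : p.[x] <> 0 ->
  exists2 d : RR, 0 < d & forall y, `|y - x| < d -> p.[y] <> 0.
Proof.
move=> px; have px' : 0 < `|p.[x]| by rewrite normr_gt0; apply/eqP.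
have [d d0 Hd] := poly_cont x p px'; exists d => // y /Hd H py.
by move: H; rewrite py sub0r normrN ltxx.
Qed.

Lemma approx_alg (x d : RR) : 0 < d -> exists2 y, alg y & `|y - x| < d.
Proof.
move=> d0; set n := (Num.Def.archi_bound d^-1).+1.
have n0 : (0 : RR) < n%:R by rewrite ltr0n.
have dn : d^-1 < n%:R.
  apply: (lt_le_trans (archi_boundP _)); first by rewrite invr_ge0 ltW.
  by rewrite ler_nat.
exists ((Num.floor (x * n%:R))%:~R / n%:R).
  by apply: algM; [apply: algint | apply: algV; apply: algnat].
have [h1 h2] := andP (floor_itv (x * n%:R)).
rewrite intrD in h2.
set f := (Num.floor (x * n%:R))%:~R in h1 h2 *.
have Hdn : n%:R^-1 < d.
  by rewrite -[d]invrK ltf_pV2 ?posrE ?invr_gt0.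
rewrite ltr_norml; apply/andP; split.
- have : f / n%:R > x - n%:R^-1.
    rewrite ltr_pdivlMr // mulrBl mulVf ?gt_eqF //; lra.
  lra.
- have : f / n%:R <= x by rewrite ler_pdivrMr.
  lra.
Qed.


Section Clause.
Variables (e : seq RR) (i : nat).
Hypothesis He : forall j, alg e`_j.
Let ev x t := GRing.eval (set_nth 0 e i x) t.

Lemma fa_and A (Q1 Q2 : A -> Prop) s : fa Q1 s -> fa Q2 s -> fa (fun t => Q1 t /\ Q2 t) s.
Proof. by elim: s => [|x s IH] //= [? ?] [? ?]; split => //; apply: IH. Qed.

Lemma clause_trans bc x : ~ alg x -> ocok alg bc -> ord.dnf_rterm bc ->
  cholds (set_nth 0 e i x) bc ->
  exists2 d : RR, 0 < d & forall y, `|y - x| < d -> cholds (set_nth 0 e i y) bc.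
Proof.
move=> nx; case: bc => a b c d [Ha [Hb [Hc Hd]]] /and4P [ra rb rc rd] /=.
have rfa : forall l, all (@GRing.rterm RR) l -> fa (@GRing.rterm RR) l.
  by elim=> [|t l IH] //= /andP [? ?]; split => //; apply: IH.
have gfa : forall l, gsok alg l -> fa (gok alg) l.
  by elim=> [|t l IH] //= [? ?]; split => //; apply: IH.
move=> [Ea [Eb [Ec Ed]]].
have [da da0 Hda] : exists2 dd : RR, 0 < dd & forall y, `|y - x| < dd ->
    fa (fun t => GRing.eval (set_nth 0 e i y) t = 0) a.
  apply: near_fa; move: (fa_and (fa_and (rfa _ ra) (gfa _ Ha)) Ea).
  apply: fa_impl => t [[rt gt] Et].
  have [p [Hp Hpx]] := term_poly i He rt gt.
  have p0 : p = 0 by apply: (poly_zero_trans nx Hp); rewrite Hpx.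
  by exists 1; rewrite ?ltr01 // => y _; rewrite -Hpx p0 horner0.
have [db db0 Hdb] : exists2 dd : RR, 0 < dd & forall y, `|y - x| < dd ->
    fa (fun t => GRing.eval (set_nth 0 e i y) t <> 0) b.
  apply: near_fa; move: (fa_and (fa_and (rfa _ rb) (gfa _ Hb)) Eb).
  apply: fa_impl => t [[rt gt] Et].
  have [p [Hp Hpx]] := term_poly i He rt gt.
  have px : p.[x] <> 0 by rewrite Hpx.
  have [dd dd0 Hdd] := poly_neq_near px.
  by exists dd => // y /Hdd; rewrite Hpx.
have [dc dc0 Hdc] : exists2 dd : RR, 0 < dd & forall y, `|y - x| < dd ->
    fa (fun t => 0 < GRing.eval (set_nth 0 e i y) t) c.
  apply: near_fa; move: (fa_and (fa_and (rfa _ rc) (gfa _ Hc)) Ec).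
  apply: fa_impl => t [[rt gt] Et].
  have [p [Hp Hpx]] := term_poly i He rt gt.
  have px : 0 < p.[x] by rewrite Hpx.
  have [dd dd0 Hdd] := poly_pos_near px.
  by exists dd => // y /Hdd; rewrite Hpx.
have [dd dd0 Hdd] : exists2 dd : RR, 0 < dd & forall y, `|y - x| < dd ->
    fa (fun t => 0 <= GRing.eval (set_nth 0 e i y) t) d.
  apply: near_fa; move: (fa_and (fa_and (rfa _ rd) (gfa _ Hd)) Ed).
  apply: fa_impl => t [[rt gt] Et].
  have [p [Hp Hpx]] := term_poly i He rt gt.
  have [p0|p0] := eqVneq p 0.
    by exists 1; rewrite ?ltr01 // => y _; rewrite -Hpx p0 horner0.
  have px : 0 < p.[x].
    rewrite lt_def Hpx Et andbT; apply/eqP => H0.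
    by move/eqP: p0; apply; apply: (poly_zero_trans nx Hp); rewrite Hpx.
  have [d' d'0 Hd'] := poly_pos_near px.
  by exists d' => // y /Hd'; rewrite Hpx => /ltW.
exists (Num.min da (Num.min db (Num.min dc dd))).
  by rewrite !lt_min da0 db0 dc0 dd0.
move=> y; rewrite !lt_min => /and4P [y1 y2 y3 y4].
by split; [apply: Hda | split; [apply: Hdb | split; [apply: Hdc | apply: Hdd]]].
Qed.

Lemma clause_alg bc x : ocok alg bc -> ord.dnf_rterm bc ->
  cholds (set_nth 0 e i x) bc -> exists2 y, alg y & cholds (set_nth 0 e i y) bc.
Proof.
move=> Hok Hr Hx; have [ax|nx] := classic (alg x); first by exists x.
have [d d0 Hd] := clause_trans nx Hok Hr Hx.
have [y ay Hy] := approx_alg x d0; exists y => //; exact: Hd.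
Qed.

End Clause.

Lemma oneD (g : ord.formula RR) (e : seq RR) i :
  ord.qf_form g && ord.rformula g -> ofok alg g -> (forall j, alg e`_j) ->
  forall x, ord.qf_eval (set_nth 0 e i x) g ->
  exists2 y, alg y & ord.qf_eval (set_nth 0 e i y) g.
Proof.
move=> Hg Hok He x.
have E z : ord.qf_eval z g = ord.qf_eval z (ord.odnf_to_oform (ord.qf_to_odnf g false)).
  by rewrite -(ord.qf_to_dnfP z Hg).
rewrite !E.
have Hr := ord.qf_to_dnf_rterm false (proj2 (andP Hg)).
have Hc : fa (ocok alg) (ord.qf_to_odnf g false).
  by apply: ocsok_fa; apply: (@qf_to_odnf_ok RR alg); try algs.
rewrite odnf_eval => Hx.
suff [y ay Hy] : exists2 y, alg y & exf (cholds (set_nth 0 e i y)) (ord.qf_to_odnf g false).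
  by exists y => //; rewrite E odnf_eval.
elim: (ord.qf_to_odnf g false) Hr Hc Hx => [|bc l IH] //= /andP [r1 r2] [c1 c2] [H|H].
  by have [y ay Hy] := clause_alg He c1 r1 H; exists y => //; left.
by have [y ay Hy] := IH r2 c2 H; exists y => //; right.
Qed.

From Stdlib Require Import Classical.

Lemma W1 (f : ord.formula RR) (e : seq RR) i : ofok alg f -> (forall j, alg e`_j) ->
  (exists x, ord.holds (set_nth 0 e i x) f) ->
  exists2 x, alg x & ord.holds (set_nth 0 e i x) f.
Proof.
move=> Hf He [x Hx].
set g := ord.quantifier_elim (fun n s => qe_rcf.qfr_to_formula (@wproj RR n s)) (ord.to_rform f).
have Eg z : ord.holds z f <-> ord.qf_eval z g.
  by split => [/rcf_satP //| H]; apply/rcf_satP.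
have Hg : ord.qf_form g && ord.rformula g.
  apply: ord.quantifier_elim_wf; last exact: ord.to_rform_rformula.
  exact: wf_QE_wproj.
have Hok : ofok alg g.
  apply: (@quantifier_elim_ok RR alg); try algs.
  by apply: (@to_rform_ok RR alg); try algs.
have [y ay Hy] := oneD Hg Hok He (proj1 (Eg _) Hx).
by exists y => //; apply/Eg.
Qed.

Definition exchain (js : seq nat) (f : ord.formula RR) := foldr (@ord.Exists RR) f js.

Lemma holds_nth (s s' : seq RR) f : (forall m, s`_m = s'`_m) -> ord.holds s f -> ord.holds s' f.
Proof. by move=> H; apply: ord.eq_holds. Qed.

Lemma exchain_intro js s f : ord.holds s f -> ord.holds s (exchain js f).
Proof.
elim: js s => [|k js IH] s //= H; exists s`_k; apply: IH.
by apply: (holds_nth _ H) => m; rewrite nth_set_nth /=; case: eqP => // ->.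
Qed.

Lemma exchain_env (js : seq nat) f s s' : (forall m, m \notin js -> s`_m = s'`_m) ->
  ord.holds s (exchain js f) -> ord.holds s' (exchain js f).
Proof.
elim: js s s' => [|k js IH] s s' /= H.
  by apply: holds_nth => m; apply: H.
case=> x Hx; exists x; apply: (IH _ _ _ Hx) => m Hm.
rewrite !nth_set_nth /=; case: eqP => // /eqP mk; apply: H.
by rewrite inE negb_or mk Hm.
Qed.

Lemma exchain_elim (js : seq nat) f s : ord.holds s (exchain js f) ->
  exists s2, (forall m, m \notin js -> s2`_m = s`_m) /\ ord.holds s2 f.
Proof.
elim: js s => [|k js IH] s /= H; first by exists s.
case: H => x /IH [s2 [H1 H2]]; exists s2; split => // m.
rewrite inE negb_or => /andP [mk mjs]; rewrite H1 // nth_set_nth /=.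
by rewrite (negbTE mk).
Qed.

Lemma ofok_exchain js f : ofok alg f -> ofok alg (exchain js f).
Proof. by elim: js => //. Qed.

Lemma Witer (js : seq nat) : forall (f : ord.formula RR) (s : seq RR), ofok alg f ->
  (forall j, j \notin js -> alg s`_j) -> ord.holds s f ->
  exists s', (forall j, alg s'`_j) /\ (forall j, j \notin js -> s'`_j = s`_j) /\
    ord.holds s' f.
Proof.
elim: js => [|j js IH] f s Hf Hs Hh; first by exists s; split => // j; apply: Hs.
set G := exchain js f.
have HG : ord.holds s G by apply: exchain_intro.
set e := mkseq (fun m => if m \in j :: js then 0 else s`_m) (size s).
have Ee m : e`_m = if m \in j :: js then 0 else s`_m.
  case: (ltnP m (size s)) => hm; first by rewrite /e nth_mkseq.
  rewrite /e nth_default ?size_mkseq //; case: ifP => // _.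
  by rewrite nth_default.
have He : forall m, alg e`_m.
  by move=> m; rewrite Ee; case: ifP => [_|/negbT hm]; [exact: alg0 | exact: Hs].
have [x ax Hx] : exists2 x, alg x & ord.holds (set_nth 0 e j x) G.
  apply: W1 => //; first exact: ofok_exchain.
  exists s`_j; apply: (exchain_env _ HG) => m Hm.
  rewrite nth_set_nth /= Ee; case: eqP => [-> //|/eqP mj].
  by rewrite inE (negbTE mj) (negbTE Hm).
have [s2 [Hs2 Hs2f]] := exchain_elim Hx.
have Hs2a : forall m, m \notin js -> alg s2`_m.
  move=> m Hm; rewrite Hs2 // nth_set_nth /=; case: eqP => // _; exact: He.
have [s' [H1 [H2 H3]]] := IH f s2 Hf Hs2a Hs2f.
exists s'; split => //; split => // m.
rewrite inE negb_or => /andP [mj mjs]; rewrite H2 // Hs2 // nth_set_nth /=.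
by rewrite (negbTE mj) Ee inE (negbTE mj) (negbTE mjs).
Qed.

Lemma exists_js (s : seq RR) : exists js : seq nat,
  (forall m, m \notin js -> alg s`_m) /\ (forall m, m \in js -> ~ alg s`_m).
Proof.
suff [js [H1 H2]] : exists js : seq nat,
    (forall m, (m < size s)%N -> m \notin js -> alg s`_m) /\ (forall m, m \in js -> ~ alg s`_m).
  exists js; split => // m Hm; case: (ltnP m (size s)) => hm; first exact: H1.
  by rewrite nth_default //; apply: alg0.
elim: (size s) => [|n [js [H1 H2]]]; first by exists [::].
have [a|na] := classic (alg s`_n).
  exists js; split => // m; rewrite ltnS leq_eqVlt => /orP [/eqP -> //|]; exact: H1.
exists (n :: js); split.
  move=> m; rewrite ltnS leq_eqVlt inE negb_or => /orP [/eqP ->|hm /andP [_ hj]].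
    by rewrite eqxx.
  exact: H1.
by move=> m; rewrite inE => /orP [/eqP -> //|]; apply: H2.
Qed.

Lemma W_final (f : ord.formula RR) (s : seq RR) : ofok alg f -> ord.holds s f ->
  exists s', (forall j, alg s'`_j) /\ (forall j, alg s`_j -> s'`_j = s`_j) /\
    ord.holds s' f.
Proof.
move=> Hf Hh; have [js [H1 H2]] := exists_js s.
have [s' [A [B C]]] := Witer Hf H1 Hh.
exists s'; split => //; split => // j aj; apply: B; apply/negP => /H2; exact.
Qed.

From Stdlib Require Import Classical ClassicalEpsilon.

Fixpoint trt (rs : seq RR) (t : Defs.term) : GRing.term RR :=
  match t with
  | tvar n => GRing.Var _ (size rs + n)
  | tzero => GRing.NatConst _ 0
  | tone => GRing.NatConst _ 1
  | tadd u v => GRing.Add (trt rs u) (trt rs v)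
  | tsub u v => GRing.Add (trt rs u) (GRing.Opp (trt rs v))
  | tmul u v => GRing.Mul (trt rs u) (trt rs v)
  | tdiv u v => GRing.Mul (trt rs u) (GRing.Inv (trt rs v))
  | tscal a u => GRing.Mul (GRing.Var _ (index a rs)) (trt rs u)
  end.

Fixpoint trf (rs : seq RR) (p : Defs.formula) : ord.formula RR :=
  match p with
  | feq u v => ord.Equal (trt rs u) (trt rs v)
  | flt u v => ord.Lt (trt rs u) (trt rs v)
  | fbot => ord.Bool false
  | fimp p q => ord.Implies (trf rs p) (trf rs q)
  | fand p q => ord.And (trf rs p) (trf rs q)
  | for_ p q => ord.Or (trf rs p) (trf rs q)
  | fall n p => ord.Forall (size rs + n) (trf rs p)
  | fex n p => ord.Exists (size rs + n) (trf rs p)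
  end.

Fixpoint tsc (t : Defs.term) : seq RR :=
  match t with
  | tvar _ | tzero | tone => [::]
  | tadd u v | tsub u v | tmul u v | tdiv u v => tsc u ++ tsc v
  | tscal a u => a :: tsc u
  end.

Fixpoint fsc (p : Defs.formula) : seq RR :=
  match p with
  | feq u v | flt u v => tsc u ++ tsc v
  | fbot => [::]
  | fimp p q | fand p q | for_ p q => fsc p ++ fsc q
  | fall _ p | fex _ p => fsc p
  end.

Lemma trt_ok rs t : gok alg (trt rs t).
Proof. by elim: t => //= *; split. Qed.

Lemma trf_ok rs p : ofok alg (trf rs p).
Proof. by elim: p => //= *; split => //; apply: trt_ok. Qed.

Lemma rdiv0E (x y : RR) : rdiv0 x y = x * y^-1.
Proof.
unfold rdiv0; destruct (RIneq.Req_dec_T y (Rdefinitions.IZR BinNums.Z0)) as [->|H].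
  by rewrite invr0 mulr0.
by [].
Qed.

Lemma tr_eval rs g (s : seq RR) env t :
  (forall n, s`_(size rs + n) = env n) ->
  {subset tsc t <= rs} -> (forall a, a \in tsc t -> s`_(index a rs) = g a) ->
  GRing.eval s (trt rs t) = eval_t Rstructure env (tsubst g t).
Proof.
move=> Hn; elim: t => //=.
- move=> u IHu v IHv Hs Hg; rewrite IHu ?IHv //.
  + by move=> a Ha; apply: Hs; rewrite mem_cat Ha orbT.
  + by move=> a Ha; apply: Hg; rewrite mem_cat Ha orbT.
  + by move=> a Ha; apply: Hs; rewrite mem_cat Ha.
  + by move=> a Ha; apply: Hg; rewrite mem_cat Ha.
- move=> u IHu v IHv Hs Hg; rewrite IHu ?IHv //.
  + by move=> a Ha; apply: Hs; rewrite mem_cat Ha orbT.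
  + by move=> a Ha; apply: Hg; rewrite mem_cat Ha orbT.
  + by move=> a Ha; apply: Hs; rewrite mem_cat Ha.
  + by move=> a Ha; apply: Hg; rewrite mem_cat Ha.
- move=> u IHu v IHv Hs Hg; rewrite IHu ?IHv //.
  + by move=> a Ha; apply: Hs; rewrite mem_cat Ha orbT.
  + by move=> a Ha; apply: Hg; rewrite mem_cat Ha orbT.
  + by move=> a Ha; apply: Hs; rewrite mem_cat Ha.
  + by move=> a Ha; apply: Hg; rewrite mem_cat Ha.
- move=> u IHu v IHv Hs Hg; rewrite IHu ?IHv ?rdiv0E //.
  + by move=> a Ha; apply: Hs; rewrite mem_cat Ha orbT.
  + by move=> a Ha; apply: Hg; rewrite mem_cat Ha orbT.
  + by move=> a Ha; apply: Hs; rewrite mem_cat Ha.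
  + by move=> a Ha; apply: Hg; rewrite mem_cat Ha.
- move=> a u IHu Hs Hg; rewrite IHu.
  + by rewrite Hg // inE eqxx.
  + by move=> b Hb; apply: Hs; rewrite inE Hb orbT.
  + by move=> b Hb; apply: Hg; rewrite inE Hb orbT.
Qed.

Lemma tr_holds rs g p : forall (s : seq RR) env,
  (forall n, s`_(size rs + n) = env n) ->
  {subset fsc p <= rs} -> (forall a, a \in fsc p -> s`_(index a rs) = g a) ->
  (ord.holds s (trf rs p) <-> holds Rstructure env (fsubst g p)).
Proof.
have sub1 : forall (l1 l2 : seq RR) P, (forall a, a \in l1 ++ l2 -> P a) -> forall a, a \in l1 -> P a.
  by move=> l1 l2 P H a Ha; apply: H; rewrite mem_cat Ha.
have sub2 : forall (l1 l2 : seq RR) P, (forall a, a \in l1 ++ l2 -> P a) -> forall a, a \in l2 -> P a.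
  by move=> l1 l2 P H a Ha; apply: H; rewrite mem_cat Ha orbT.
elim: p => /=.
- move=> u v s env Hn Hs Hg.
  rewrite (tr_eval Hn (sub1 _ _ _ Hs) (sub1 _ _ _ Hg)).
  rewrite (tr_eval Hn (sub2 _ _ _ Hs) (sub2 _ _ _ Hg)).
  by [].
- move=> u v s env Hn Hs Hg.
  rewrite (tr_eval Hn (sub1 _ _ _ Hs) (sub1 _ _ _ Hg)).
  rewrite (tr_eval Hn (sub2 _ _ _ Hs) (sub2 _ _ _ Hg)).
  by split => /RltP.
- by move=> *; split.
- move=> p IHp q IHq s env Hn Hs Hg.
  rewrite (IHp s env Hn (sub1 _ _ _ Hs) (sub1 _ _ _ Hg)).
  by rewrite (IHq s env Hn (sub2 _ _ _ Hs) (sub2 _ _ _ Hg)).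
- move=> p IHp q IHq s env Hn Hs Hg.
  rewrite (IHp s env Hn (sub1 _ _ _ Hs) (sub1 _ _ _ Hg)).
  by rewrite (IHq s env Hn (sub2 _ _ _ Hs) (sub2 _ _ _ Hg)).
- move=> p IHp q IHq s env Hn Hs Hg.
  rewrite (IHp s env Hn (sub1 _ _ _ Hs) (sub1 _ _ _ Hg)).
  by rewrite (IHq s env Hn (sub2 _ _ _ Hs) (sub2 _ _ _ Hg)).
- move=> n p IHp s env Hn Hs Hg.
  have K : forall x, (forall k, (set_nth 0 s (size rs + n) x)`_(size rs + k) = upd env n x k) /\
     (forall a, a \in fsc p -> (set_nth 0 s (size rs + n) x)`_(index a rs) = g a).
    move=> x; split.
      move=> k; rewrite nth_set_nth /= eqn_add2l /upd.
      by case: (PeanoNat.Nat.eqb_spec k n) => [->|/eqP/negbTE ->]; rewrite ?eqxx // Hn.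
    move=> a Ha; rewrite nth_set_nth /=.
    have : (index a rs < size rs)%N by rewrite index_mem; apply: Hs.
    case: eqP => [->|_ _]; last exact: Hg.
    by rewrite ltnNge leq_addr.
  split => H x; [apply/(IHp _ _ (proj1 (K x)) Hs (proj2 (K x)))|apply/(IHp _ _ (proj1 (K x)) Hs (proj2 (K x)))]; exact: H.
- move=> n p IHp s env Hn Hs Hg.
  have K : forall x, (forall k, (set_nth 0 s (size rs + n) x)`_(size rs + k) = upd env n x k) /\
     (forall a, a \in fsc p -> (set_nth 0 s (size rs + n) x)`_(index a rs) = g a).
    move=> x; split.
      move=> k; rewrite nth_set_nth /= eqn_add2l /upd.
      by case: (PeanoNat.Nat.eqb_spec k n) => [->|/eqP/negbTE ->]; rewrite ?eqxx // Hn.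
    move=> a Ha; rewrite nth_set_nth /=.
    have : (index a rs < size rs)%N by rewrite index_mem; apply: Hs.
    case: eqP => [->|_ _]; last exact: Hg.
    by rewrite ltnNge leq_addr.
  split => -[x H]; exists x; [apply/(IHp _ _ (proj1 (K x)) Hs (proj2 (K x)))|apply/(IHp _ _ (proj1 (K x)) Hs (proj2 (K x)))]; exact: H.
Qed.

Lemma term_in_all t : term_in (fun _ => Logic.True) true true t.
Proof. by elim: t => //= *; split. Qed.

Lemma formula_in_all p : formula_in (fun _ => Logic.True) true true p.
Proof. by elim: p => //= *; split => //; apply: term_in_all. Qed.

Lemma fsubst_idf p : fsubst (fun x => x) p = p.
Proof. exact: (@fsubst_id _ _ _ (fun x => x) p (formula_in_all p) (fun a _ => erefl a)). Qed.

Lemma fa_sub (qs : seq Defs.formula) :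
  fa (fun q => {subset fsc q <= flatten (map fsc qs)}) qs.
Proof.
elim: qs => [|q qs IH] //=; split.
  by move=> a Ha; rewrite mem_cat Ha.
by apply: (fa_impl _ IH) => r Hr a Ha; rewrite mem_cat (Hr a Ha) orbT.
Qed.

Definition conj_tr rs (qs : seq Defs.formula) :=
  foldr (fun q acc => ord.And (trf rs q) acc) (ord.Bool true) qs.

Lemma conj_tr_holds rs (s : seq RR) qs :
  ord.holds s (conj_tr rs qs) <-> fa (fun q => ord.holds s (trf rs q)) qs.
Proof. by elim: qs => [|q qs IH] //=; rewrite IH. Qed.

Lemma conj_tr_ok rs qs : ofok alg (conj_tr rs qs).
Proof. by elim: qs => //= q qs IH; split => //; apply: trf_ok. Qed.

Lemma fa_and2 A (Q1 Q2 : A -> Prop) s : fa Q1 s -> fa Q2 s -> fa (fun t => Q1 t /\ Q2 t) s.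
Proof. by elim: s => [|x s IH] //= [? ?] [? ?]; split => //; apply: IH. Qed.

Lemma FIP (qs : seq Defs.formula) : fa (fun q => sentence q /\ sat Rstructure q) qs ->
  exists g : RR -> RR, (forall r, alg (g r)) /\ (forall r, alg r -> g r = r) /\
     fa (fun q => sat Rstructure (fsubst g q)) qs.
Proof.
move=> Hqs; set rs := flatten (map fsc qs).
have Hsub := fa_sub qs.
have H0 : ord.holds rs (conj_tr rs qs).
  apply/conj_tr_holds; apply: (fa_impl _ (fa_and2 Hqs Hsub)) => q [[Hsent Hsat] Hs].
  apply/(@tr_holds rs (fun x => x) q rs (fun _ => 0)) => //.
  - by move=> n; rewrite nth_default // leq_addr.
  - by move=> a Ha; rewrite nth_index //; apply: Hs.
  - by rewrite fsubst_idf; apply: Hsat.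
have [s' [Halg [Hfix Hh]]] := W_final (conj_tr_ok rs qs) H0.
pose g := fun a : RR => if a \in rs then s'`_(index a rs)
  else if excluded_middle_informative (alg a) then a else 0.
exists g; split; [|split].
- move=> r; rewrite /g; case: ifP => _; first exact: Halg.
  by case: (excluded_middle_informative (alg r)) => H /=; [|apply: alg0].
- move=> r ar; rewrite /g; case: ifP => Hr.
    by rewrite Hfix nth_index // ?Hr //; rewrite nth_index.
  by case: (excluded_middle_informative (alg r)).
- move/conj_tr_holds: Hh => Hh.
  apply: (fa_impl _ (fa_and2 (fa_and2 Hqs Hsub) Hh)) => q [[[Hsent _] Hs] Hq] e.
  apply: (sentence_holds Rstructure (fsubst g q) (fun n => s'`_(size rs + n)) e (sentence_subst g q Hsent)).
  apply/(@tr_holds rs g q s') => // a Ha.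
  by rewrite /g (Hs a Ha).
Qed.

From Stdlib Require Import Lia.

Lemma zpoly_Poly (cs : list BinNums.Z) x : zpoly_eval cs x = (Poly (map Rdefinitions.IZR cs)).[x].
Proof.
elim: cs => [|c cs IH] /=; first by rewrite horner0.
have E1 : forall a b : RR, Rdefinitions.RbaseSymbolsImpl.Rplus a b = a + b by []. 
have E2 : forall a b : RR, Rdefinitions.RbaseSymbolsImpl.Rmult a b = a * b by [].
by rewrite cons_poly_def hornerE IH E1 E2 hornerMX hornerC addrC mulrC.
Qed.

Lemma alg_IZR z : alg (Rdefinitions.IZR z).
Proof.
case: z => [|p|p]; first exact: alg0.
  by rewrite IZRposE INRE; apply: algnat.
have -> : Rdefinitions.IZR (BinNums.Zneg p) = - Rdefinitions.IZR (BinNums.Zpos p) by [].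
by apply: algN; rewrite IZRposE INRE; apply: algnat.
Qed.

Lemma real_algebraic_alg x : real_algebraic x -> alg x.
Proof.
case=> cs [[c [Hc c0]] Hz].
have p0 : Poly (map Rdefinitions.IZR cs) != 0.
  apply/eqP => H0.
  have : forall k, (map Rdefinitions.IZR cs)`_k = 0.
    by move=> k; rewrite -coef_Poly H0 coef0.
  elim: cs Hc {Hz H0} => [|d cs IH] //= [->|Hc] Hk.
    by apply: c0; apply: RIneq.eq_IZR; apply: (Hk 0%N).
  by apply: IH => // k; apply: (Hk k.+1).
apply: (alg_root p0).
  move=> k; rewrite coef_Poly.
  elim: cs {Hc Hz p0} k => [|d cs IH] [|k] /=; try exact: alg0; first exact: alg_IZR.
  exact: IH.
by apply/rootP; rewrite -zpoly_Poly.
Qed.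

Definition Z_of_int (z : int) : BinNums.Z :=
  match z with Posz n => BinInt.Z.of_nat n | Negz n => BinInt.Z.opp (BinInt.Z.of_nat n.+1) end.

Lemma IZR_Z_of_int z : Rdefinitions.IZR (Z_of_int z) = z%:~R.
Proof.
case: z => n; rewrite /Z_of_int.
  by rewrite -RIneq.INR_IZR_INZ INRE.
by rewrite RIneq.opp_IZR -RIneq.INR_IZR_INZ INRE NegzE mulrNz.
Qed.

Lemma Z_of_int_eq0 z : Z_of_int z = BinNums.Z0 -> z = 0.
Proof. case: z => n /= H; [|lia]; by have -> : n = 0%N by lia. Qed.

Lemma alg_real_algebraic x : alg x -> real_algebraic x.
Proof.
case=> p p0 /rootP px.
have [q [a a0 Ep]] := rat_poly_scale p.
have q0 : q != 0.
  by apply: contra p0 => /eqP q0; rewrite Ep q0 map_poly0 scaler0.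
have Hq : (map_poly (intr : int -> RR) q).[x] = 0.
  move: px; rewrite Ep linearZ /= -map_poly_comp hornerZ.
  have -> : map_poly (ratr \o intr) q = map_poly (intr : int -> RR) q.
    by apply: eq_map_poly => z /=; rewrite ratr_int.
  move/eqP; rewrite mulf_eq0 => /orP [|/eqP //].
  by rewrite fmorph_eq0 invr_eq0 intr_eq0 (negbTE a0).
exists (map Z_of_int q); split.
  have : lead_coef q \in (q : seq int).
    by rewrite lead_coefE mem_nth // prednK ?size_poly_gt0 // size_poly_gt0.
  have lq0 : lead_coef q != 0 by rewrite lead_coef_eq0.
  elim: (q : seq int) => [|z s IH] //=; rewrite inE => /orP [/eqP Ez|Hs].
    exists (Z_of_int z); split; first by left.
    by move/Z_of_int_eq0 => z0; move: lq0; rewrite Ez z0 eqxx.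
  by have [c [Hc c0]] := IH Hs; exists c; split => //; right.
rewrite zpoly_Poly -map_comp.
have -> : map (Rdefinitions.IZR \o Z_of_int) q = map (intr : int -> RR) q.
  by apply: eq_map => z /=; rewrite IZR_Z_of_int.
by rewrite -map_polyE.
Qed.

From mathcomp Require Import boolp classical_sets filter.
From Stdlib Require Import Classical.

Lemma fa_In A (Q : A -> Prop) s x : fa Q s -> List.In x s -> Q x.
Proof. by elim: s => [|y s IH] //= [Hy Hs] [<-|H]; [|apply: IH]. Qed.

Lemma fa_In' A (Q : A -> Prop) s : (forall x, List.In x s -> Q x) -> fa Q s.
Proof.
elim: s => [|y s IH] //= H; split; first by apply: H; left.
by apply: IH => x Hx; apply: H; right.
Qed.

Lemma sublist_T (P : Defs.formula -> Prop) (qs : seq Defs.formula) :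
  exists qs', fa P qs' /\ (forall q, List.In q qs -> P q -> List.In q qs').
Proof.
elim: qs => [|q qs [qs' [H1 H2]]]; first by exists [::].
have [Hq|Hq] := classic (P q).
  exists (q :: qs'); split => //= r [<-|Hr] Pr; [by left|right; exact: H2].
exists qs'; split => // r [<-|Hr] Pr; [by []|exact: H2].
Qed.

Definition Idx := {g : Rdefinitions.R -> Rdefinitions.R |
  (forall r, real_algebraic (g r)) /\ (forall r, real_algebraic r -> g r = r)}.

Definition Bset (qs : seq Defs.formula) : set Idx :=
  fun g => fa (fun q => T all_reals q -> sat Rstructure (fsubst (proj1_sig g) q)) qs.

Lemma Bset_ne qs : (Bset qs !=set0)%classic.
Proof.
have [qs' [H1 H2]] := sublist_T (T all_reals) qs.
have H1' : fa (fun q => sentence q /\ sat Rstructure q) qs'.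
  by apply: (fa_impl _ H1) => q [[? [? ?]]|[? [? ?]]].
have [g [Ha [Hf Hs]]] := FIP H1'.
have HI : (forall r, real_algebraic (g r)) /\ (forall r, real_algebraic r -> g r = r).
  split => r; first by apply: alg_real_algebraic.
  by move=> /real_algebraic_alg; apply: Hf.
exists (exist _ g HI); rewrite /Bset /=.
apply: fa_In' => q Hq Tq; apply: (fa_In Hs); exact: H2.
Qed.

Lemma fa_cat_inv A (Q : A -> Prop) a b : fa Q (a ++ b) -> fa Q a /\ fa Q b.
Proof. by elim: a => [|x a IH] //= [Hx /IH [? ?]]. Qed.

Theorem main_thm :
  forall p : Defs.formula,
    sentence p -> L_full real_algebraic p ->
    entails (T all_reals) p -> entails (T real_algebraic) p.
Proof.
move=> p Hs HL Hent M HM e.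
have Hdir : forall i j : seq Defs.formula, exists k, (Bset k `<=` Bset i `&` Bset j)%classic.
  by move=> i j; exists (i ++ j) => g /= /fa_cat_inv [? ?]; split.
have FF : Filter (filter_from setT Bset).
  exact: (@filter_fromT_filter _ _ Bset (ex_intro _ [::] Logic.I) Hdir).
have PF : ProperFilter (filter_from setT Bset).
  by apply: filter_from_proper => // i _; apply: Bset_ne.
have [G [UG HG]] := ultraFilterLemma PF.
have PG : ProperFilter G := @ultra_proper _ _ UG.
have UT : G (fun _ => Logic.True) by apply: filterT.
have U0 : ~ G (fun _ => Logic.False) by apply: filter_not_empty.
have UI : forall A B : Idx -> Prop, G A -> G B -> G (fun i => A i /\ B i).
  by move=> A B HA HB; apply: filterI.
have UM : forall A B : Idx -> Prop, (forall i, A i -> B i) -> G A -> G B.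
  by move=> A B HAB; apply: filterS.
have Uu : forall A : Idx -> Prop, G A \/ G (fun i => ~ A i).
  by move=> A; apply: in_ultra_setVsetC.
pose Ms := fun g : Idx => Mg M (proj1_sig g).
have HUP : forall q, T all_reals q -> sat (UP Idx G Ms) q.
  move=> q Tq E; apply (proj2 (los Idx G UT U0 UI UM Uu Ms q E)).
  have HB : G (Bset [:: q]) by apply: HG; apply: in_filter_from.
  apply: (UM _ _ _ HB) => g [Hg _].
  have Hsat := Hg Tq.
  apply (proj2 (holds_Mg _ _ _ _)); apply: HM.
  clear Hg; case: g Hsat => g [Ha Hf] /= Hsat.
  case: Tq => [[Hsq [HLq _]]|[Hsq [HLq _]]]; [left|right]; split;
    (try exact: (sentence_subst _ _ Hsq)); split => //;
    exact: (formula_in_subst _ _ _ _ _ _ HLq Ha).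
have Hp := Hent _ HUP (fun _ => cls Idx G Ms (fun g => s_zero M)).
move/(los Idx G UT U0 UI UM Uu Ms): Hp => Hp.
have [g Hg] := filter_ex Hp.
move: (proj1 (holds_Mg _ _ _ _) Hg); clear Hg; case: g => g [Ha Hf] /=.
rewrite (fsubst_id _ _ _ _ _ HL Hf) => Hg.
exact: (sentence_holds _ _ _ _ Hs Hg).
Qed.


Theorem theorem4p4 :
  forall p : Defs.formula,
    Defs.sentence p -> Defs.L_full Defs.real_algebraic p ->
    Defs.entails (Defs.T Defs.all_reals) p -> Defs.entails (Defs.T Defs.real_algebraic) p.
Proof. exact: main_thm. Qed.
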